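(* Let $f = \sigma_m \circ f_m \circ \sigma_{m-1} \circ f_{m-1} \circ \cdots \circ \sigma_1 \circ f_1$ be a CNN acting on bounded fields $\mathbb{Z}^2 \to \mathbb{R}$, where each $f_i(\bm{X}) = \bm{X} \ast K_i$ is a convolution with a finitely supported kernel $K_i \colon \mathbb{Z}^2 \to \mathbb{R}$ and each $\sigma_i \colon \mathbb{R} \to \mathbb{R}$ is a piecewise differentiable activation applied pointwise. If each combined layer $\sigma_i \circ f_i$ is equivariant with respect to arbitrary uniform motion (i.e. $(\sigma_i\circ f_i)(\bm{X} + \bm{C}) = (\sigma_i\circ f_i)(\bm{X}) + \bm{C}$ for all fields $\bm{X}$ and constant fields $\bm{C}$), then $f$ is an affine map.
   Context: Convolution: $(\bm{X}\ast K)(p) = \sum_{q \in \mathbb{Z}^2} \bm{X}(p+q)K(q)$. A constant field takes the same real value at every point of $\mathbb{Z}^2$. *)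

(* Defs.v *)
From Stdlib Require Import Reals ZArith List.
Open Scope R_scope.

Definition point := (Z * Z)%type.
Definition field := point -> R.

Definition padd (p q : point) : point := ((fst p + fst q)%Z, (snd p + snd q)%Z).

Definition bounded_field (X : field) : Prop := exists M : R, forall p, Rabs (X p) <= M.

Definition const_field (c : R) : field := fun _ => c.

Definition fadd (X Y : field) : field := fun p => X p + Y p.
Definition fscale (a : R) (X : field) : field := fun p => a * X p.

Definition supported_in (N : nat) (K : field) : Prop :=
  forall q : point, (Z.abs (fst q) > Z.of_nat N)%Z \/ (Z.abs (snd q) > Z.of_nat N)%Z -> K q = 0.

Definition Zrange (N : nat) : list Z :=
  map (fun k => (Z.of_nat k - Z.of_nat N)%Z) (seq 0 (2 * N + 1)).

Definition Rsum (l : list R) : R := fold_right Rplus 0 l.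

Definition boxsum (N : nat) (g : point -> R) : R :=
  Rsum (map (fun a => Rsum (map (fun b => g (a, b)) (Zrange N))) (Zrange N)).

(* Convolution (X * K)(p) = sum_{q in Z^2} X(p+q) K(q); for K supported in
   [-N,N]^2 the sum over Z^2 is exactly the sum over that box. *)
Definition conv (N : nat) (K : field) (X : field) : field :=
  fun p => boxsum N (fun q => X (padd p q) * K q).

Definition piecewise_differentiable (s : R -> R) : Prop :=
  exists bad : list R, forall x, ~ In x bad -> exists d, derivable_pt_lim s x d.

Definition layer (sigma : R -> R) (N : nat) (K : field) (X : field) : field :=
  fun p => sigma (conv N K X p).

(* The CNN with layers indexed 0..m-1, applied in order 0 first. *)
Fixpoint cnn (sigma : nat -> R -> R) (N : nat -> nat) (K : nat -> field)
    (m : nat) (X : field) : field :=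
  match m with
  | O => X
  | S k => layer (sigma k) (N k) (K k) (cnn sigma N K k X)
  end.

Definition affine_on_bounded (f : field -> field) : Prop :=
  exists (L : field -> field) (B : field),
    (forall (a b : R) (X Y : field), bounded_field X -> bounded_field Y ->
        forall p, L (fadd (fscale a X) (fscale b Y)) p = a * L X p + b * L Y p) /\
    (forall X, bounded_field X -> forall p, f X p = L X p + B p).

(* Main.v *)
Require Import Defs.
From Stdlib Require Import Reals ZArith List Lra Lia.
Open Scope R_scope.

Lemma Rsum_lin (A : Type) (l : list A) (g h k : A -> R) (a b : R) :
  (forall x, k x = a * g x + b * h x) ->
  Rsum (map k l) = a * Rsum (map g l) + b * Rsum (map h l).
Proof.
  intro H; induction l as [|x l IH]; simpl; [ring|]. rewrite IH, H; ring.
Qed.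

Lemma boxsum_lin (n : nat) (g h k : point -> R) (a b : R) :
  (forall x, k x = a * g x + b * h x) ->
  boxsum n k = a * boxsum n g + b * boxsum n h.
Proof.
  intro H; unfold boxsum; apply Rsum_lin; intro x; apply Rsum_lin; intro y; apply H.
Qed.

Lemma strong (m : nat) (sigma : nat -> R -> R) (N : nat -> nat) (K : nat -> field)
  (hequiv : forall i, (i < m)%nat -> forall (X : field) (c : R), bounded_field X ->
      forall p, layer (sigma i) (N i) (K i) (fadd X (const_field c)) p
                = layer (sigma i) (N i) (K i) X p + c) :
  exists (L : field -> field) (B : field),
    (forall (a b : R) (X Y : field) p,
        L (fadd (fscale a X) (fscale b Y)) p = a * L X p + b * L Y p) /\
    (forall X p, cnn sigma N K m X p = L X p + B p).
Proof.
  induction m as [|k IH].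
  - exists (fun X => X), (const_field 0). split.
    + intros; reflexivity.
    + intros; unfold const_field; simpl; ring.
  - destruct IH as [L [B [HL HB]]].
    { intros i Hi; apply hequiv; lia. }
    set (S := boxsum (N k) (K k)).
    set (s0 := sigma k 0).
    assert (F1 : forall c, sigma k (c * S) = s0 + c).
    { intro c.
      assert (Hb : bounded_field (const_field 0)).
      { exists 0; intro; unfold const_field; rewrite Rabs_R0; lra. }
      pose proof (hequiv k (Nat.lt_succ_diag_r k) (const_field 0) c Hb (0%Z,0%Z)) as E.
      unfold layer, conv in E.
      rewrite (boxsum_lin _ (K k) (K k) _ c 0) in E
        by (intros; cbv beta; unfold fadd, const_field; ring).
      rewrite (boxsum_lin _ (K k) (K k) (fun q => const_field 0 (padd (0%Z,0%Z) q) * K k q) 0 0) in E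
        by (intros; cbv beta; unfold const_field; ring).
      fold S in E. unfold s0. replace (0 * S + 0 * S) with 0 in E by ring.
      replace (c * S + 0 * S) with (c * S) in E by ring. exact E. }
    assert (F2 : S <> 0).
    { intro HS. pose proof (F1 1) as E. rewrite HS in E.
      replace (1 * 0) with 0 in E by ring. unfold s0 in E. lra. }
    assert (F3 : forall t, sigma k t = s0 + t / S).
    { intro t. rewrite <- F1. f_equal. field. exact F2. }
    exists (fun X p => conv (N k) (K k) (L X) p / S).
    exists (fun p => s0 + conv (N k) (K k) B p / S).
    split.
    + intros a b X Y p. unfold conv.
      rewrite (boxsum_lin _ (fun q => L X (padd p q) * K k q)
                 (fun q => L Y (padd p q) * K k q) _ a b)
        by (intros; cbv beta; rewrite HL; ring).
      field. exact F2.
    + intros X p. simpl. unfold layer. rewrite F3. unfold conv.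
      rewrite (boxsum_lin _ (fun q => L X (padd p q) * K k q)
                 (fun q => B (padd p q) * K k q) _ 1 1)
        by (intros; cbv beta; rewrite HB; ring).
      field. exact F2.
Qed.

Theorem mainTheorem7 (m : nat) (sigma : nat -> R -> R) (N : nat -> nat) (K : nat -> field)
  (hK : forall i, (i < m)%nat -> supported_in (N i) (K i))
  (hsigma : forall i, (i < m)%nat -> piecewise_differentiable (sigma i))
  (hequiv : forall i, (i < m)%nat -> forall (X : field) (c : R), bounded_field X ->
      forall p, layer (sigma i) (N i) (K i) (fadd X (const_field c)) p
                = layer (sigma i) (N i) (K i) X p + c) :
  affine_on_bounded (cnn sigma N K m).
Proof.
  destruct (strong m sigma N K hequiv) as [L [B [HL HB]]].
  exists L, B; split; intros; auto.
Qed.
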